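(* Fix $k\in\mathbb{Z}_{\ge1}$. Let $\sigma\in\mathrm{Av}(312)$ with $|\sigma|\ge k$ and $\mathrm{en}_k(\sigma)=\pi$, where $\pi\in\mathrm{Av}_k(312)$. Let $\pi'\in\mathrm{Av}_k(312)$ be such that $\mathrm{pat}_{\{1,\dots,k-1\}}(\pi')=\mathrm{pat}_{\{2,\dots,k\}}(\pi)$ (i.e. the edge $\pi'$ of $\mathcal{O}v(k,\mathrm{Av}(312))$ starts where the edge $\pi$ ends). Then there exists $\ell\in[|\sigma|+1]$ such that $\sigma^{*\ell}\in\mathrm{Av}(312)$ and $\mathrm{en}_k(\sigma^{*\ell})=\pi'$.
   Context: For $I=\{i_1<\dots<i_m\}$, $\mathrm{pat}_I(\sigma)=\mathrm{std}(\sigma(i_1),\dots,\sigma(i_m))$, where for distinct reals $x_1,\dots,x_m$, $\mathrm{std}(x_1,\dots,x_m)$ is the unique permutation $\pi$ of $[m]$ with $\pi(i)<\pi(j)\iff x_i<x_j$. $\mathrm{en}_k(\sigma)=\mathrm{pat}_{\{|\sigma|-k+1,\dots,|\sigma|\}}(\sigma)$. $\mathrm{Av}(312)$ is the set of permutations $\sigma$ with no $I$ such that $\mathrm{pat}_I(\sigma)=312$, and $\mathrm{Av}_k(312)$ those of size $k$. For $\sigma\in\mathcal S_n$ and $\ell\in[n+1]$, $\sigma^{*\ell}=\mathrm{std}(\sigma(1),\dots,\sigma(n),\ell-1/2)\in\mathcal S_{n+1}$ (append a final value $\ell$, shifting up by one all earlier values $\ge\ell$). The overlap graph $\mathcal{O}v(k,\mathrm{Av}(312))$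 has vertex set $\mathrm{Av}_{k-1}(312)$ and, for each $\pi\in\mathrm{Av}_k(312)$, an edge labelled $\pi$ from $\mathrm{pat}_{\{1,\dots,k-1\}}(\pi)$ to $\mathrm{pat}_{\{2,\dots,k\}}(\pi)$. *)

(* Defs.v *)
From mathcomp Require Import all_boot.
Set Implicit Arguments. Unset Strict Implicit. Unset Printing Implicit Defensive.

(* Permutations of [n] are represented as sequences of naturals (one-line
   notation, values 1..n, positions 1..n). *)

Definition is_perm (s : seq nat) : bool := perm_eq s (iota 1 (size s)).

(* std(x_1,...,x_m): the permutation of [m] order-isomorphic to a sequence of
   distinct naturals; the i-th entry is the rank (1-based) of x_i. *)
Definition std (s : seq nat) : seq nat :=
  [seq (count (fun y => y < x) s).+1 | x <- s].

Definition index_set (n : nat) (I : seq nat) : bool :=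
  sorted ltn I && all (fun i => (1 <= i) && (i <= n)) I.

(* pat_I(sigma), positions 1-based *)
Definition pat (I : seq nat) (sigma : seq nat) : seq nat :=
  std [seq nth 0 sigma i.-1 | i <- I].

Definition en (k : nat) (sigma : seq nat) : seq nat :=
  pat (iota (size sigma - k).+1 k) sigma.

Definition avoids312 (sigma : seq nat) : Prop :=
  forall I, index_set (size sigma) I -> pat I sigma <> [:: 3; 1; 2].

Definition Av312 (sigma : seq nat) : Prop := is_perm sigma /\ avoids312 sigma.

Definition Av312_k (k : nat) (sigma : seq nat) : Prop :=
  size sigma = k /\ Av312 sigma.

(* sigma^{*l} = std(sigma(1),...,sigma(n), l - 1/2); computed after doubling
   all values: std(2 sigma(1), ..., 2 sigma(n), 2l - 1). *)
Definition ext (sigma : seq nat) (l : nat) : seq nat :=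
  std (rcons [seq x.*2 | x <- sigma] (l.*2).-1).

(* Main.v *)
Require Import Defs.
From mathcomp Require Import all_boot zify.
Set Implicit Arguments. Unset Strict Implicit.

Lemma count_idx (p : pred nat) s :
  count p s = count (fun j => p (nth 0 s j)) (iota 0 (size s)).
Proof. by rewrite -{1}(mkseq_nth 0 s) /mkseq count_map. Qed.

Lemma count_all_true (p : pred nat) s : {in s, forall x, p x} -> count p s = size s.
Proof. move=> H; apply/eqP; rewrite -all_count; exact/allP. Qed.

Lemma count_all_false (p : pred nat) s : {in s, forall x, ~~ p x} -> count p s = 0.
Proof. move=> H; apply/eqP; rewrite -leqn0 leqNgt -has_count; apply/hasP => -[x /H]; by move/negP. Qed.

Lemma count_iota_lt a m x : a <= x <= a + m ->
  count (fun y => y < x) (iota a m) = x - a.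
Proof.
move=> /andP[h1 h2].
have -> : m = (x - a) + (a + m - x) by lia.
rewrite iotaD count_cat count_all_true ?size_iota; last first.
  by move=> y; rewrite mem_iota; lia.
rewrite count_all_false //. 2: by move=> y; rewrite mem_iota; lia.
by rewrite addn0.
Qed.

Lemma count_lt_le s a b : a <= b -> count (fun y => y < a) s <= count (fun y => y < b) s.
Proof. move=> h; apply: sub_count => y /=; lia. Qed.

Lemma count_lt_strict s a b : a < b -> a \in s -> count (fun y => y < a) s < count (fun y => y < b) s.
Proof.
elim: s => //= x s IH hab.
rewrite in_cons => /orP[/eqP <-|hs].
  have := @count_lt_le s _ _ (ltnW hab). rewrite ltnn hab /=. lia.
have := IH hab hs. case: (ltnP x a) => hx.
  have : x < b by lia. move=> ->. lia.
case: (x < b); lia.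
Qed.

Lemma size_std s : size (std s) = size s.
Proof. by rewrite size_map. Qed.

Lemma nth_std s i : i < size s -> nth 0 (std s) i = (count (fun y => y < nth 0 s i) s).+1.
Proof. move=> h; by rewrite (nth_map 0). Qed.

Lemma std_cmp s i j : i < size s -> j < size s ->
  (nth 0 (std s) i < nth 0 (std s) j) = (nth 0 s i < nth 0 s j).
Proof.
move=> hi hj; rewrite !nth_std // ltnS.
case: (ltnP (nth 0 s i) (nth 0 s j)) => h.
  by apply: count_lt_strict => //; apply: mem_nth.
by apply/negbTE; rewrite -leqNgt; apply: count_lt_le.
Qed.

Lemma std_eq s t : size s = size t ->
  (forall i j, i < size s -> j < size s -> (nth 0 s i < nth 0 s j) = (nth 0 t i < nth 0 t j)) ->
  std s = std t.
Proof.
move=> hs H; apply: (@eq_from_nth _ 0); rewrite ?size_std // => i hi.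
rewrite !nth_std -?hs // count_idx [in RHS]count_idx -hs.
congr S; apply: eq_in_count => j; rewrite mem_iota add0n => hj.
by rewrite H.
Qed.

Lemma perm_mem_range s (x : nat) : is_perm s -> x \in s -> 1 <= x <= size s.
Proof. rewrite /is_perm => /perm_mem ->; rewrite mem_iota; lia. Qed.

Lemma perm_nth_range s i : is_perm s -> i < size s -> 1 <= nth 0 s i <= size s.
Proof. move=> hp hi; exact: (perm_mem_range hp (mem_nth 0 hi)). Qed.

Lemma perm_uniq' s : is_perm s -> uniq s.
Proof. rewrite /is_perm => /perm_uniq ->; exact: iota_uniq. Qed.

Lemma perm_count_lt s x : is_perm s -> 1 <= x <= (size s).+1 ->
  count (fun y => y < x) s = x - 1.
Proof.
rewrite /is_perm => /permP -> h. rewrite count_iota_lt //; lia.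
Qed.

Lemma std_perm s : is_perm s -> std s = s.
Proof.
move=> hp; apply: (@eq_from_nth _ 0); rewrite ?size_std // => i hi.
rewrite nth_std // perm_count_lt //.
  have := perm_nth_range hp hi; lia.
have := perm_nth_range hp hi; lia.
Qed.

Lemma uniq_std_perm (t : seq nat) : uniq t -> is_perm (std t).
Proof.
move=> ut.
have us : uniq (std t).
  apply/(uniqP 0) => i j; rewrite !inE size_std => hi hj e.
  apply/eqP; rewrite -(nth_uniq 0 hi hj ut).
  have := std_cmp hi hj; have := std_cmp hj hi; rewrite e ltnn.
  move=> h1 h2. apply/eqP. move: h1 h2. case: ltngtP => //.
rewrite /is_perm; apply: uniq_perm => //; first exact: iota_uniq.
have sub : {subset std t <= iota 1 (size (std t))}.
  move=> x /(nthP 0) [i hi <-]; rewrite mem_iota nth_std -?(size_std t) //.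
  have : count (fun y => y < nth 0 t i) t < size t.
    have h1 := count_predC (fun y => y < nth 0 t i) t.
    have h2 : 0 < count (predC (fun y => y < nth 0 t i)) t.
      rewrite -has_count; apply/hasP; exists (nth 0 t i); first by apply: mem_nth; rewrite -(size_std t).
      by rewrite /= ltnn.
    lia.
  rewrite size_std; lia.
have [] := uniq_min_size us sub; first by rewrite size_iota.
by [].
Qed.


Lemma std3 (x y z : nat) : (std [:: x; y; z] == [:: 3; 1; 2]) = (y < z < x).
Proof.
rewrite /std /=.
case: (ltngtP x y); case: (ltngtP y z); case: (ltngtP x z) => h1 h2 h3 //=; try lia.
all: by rewrite ?ltnn.
Qed.

Definition av (s : seq nat) := forall i j h, i < j -> j < h -> h < size s ->
  ~~ ((nth 0 s j < nth 0 s h) && (nth 0 s h < nth 0 s i)).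

Lemma avoidsE s : avoids312 s <-> av s.
Proof.
split.
  move=> A i j h hij hjh hh; apply/negP => /andP[c1 c2].
  apply: (A [:: i.+1; j.+1; h.+1]).
    rewrite /index_set /=. lia.
  by apply/eqP; rewrite /pat /= std3 c1 c2.
move=> A I hI hp.
have hs : size I = 3 by rewrite -(size_map (fun i => nth 0 s i.-1)) -(size_std) -/(pat I s) hp.
case: I hs hI hp => [|a [|b [|c [|]]]] // _.
rewrite /index_set /= => hI.
move/eqP; rewrite /pat /= std3 => /andP[c1 c2].
have := A a.-1 b.-1 c.-1. rewrite c1 c2 /=.
have -> : a.-1 < b.-1 by lia.
have -> : b.-1 < c.-1 by lia.
have -> : c.-1 < size s by lia.
by move=> /(_ isT isT isT).
Qed.

Lemma pat_iota_size a m s : size (pat (iota a.+1 m) s) = m.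
Proof. by rewrite /pat size_std size_map size_iota. Qed.

Lemma pat_iota_nth a m s i : i < m ->
  nth 0 [seq nth 0 s i.-1 | i <- iota a.+1 m] i = nth 0 s (a + i).
Proof. move=> hi; by rewrite (nth_map 0) ?size_iota // nth_iota. Qed.

Lemma pat_iota_cmp a m s i j : i < m -> j < m ->
  (nth 0 (pat (iota a.+1 m) s) i < nth 0 (pat (iota a.+1 m) s) j) =
  (nth 0 s (a + i) < nth 0 s (a + j)).
Proof.
move=> hi hj; rewrite /pat std_cmp ?size_map ?size_iota //.
by rewrite !pat_iota_nth.
Qed.

Lemma pat_iota_eq a m s t : is_perm t -> size t = m ->
  (forall i j, i < m -> j < m -> (nth 0 s (a + i) < nth 0 s (a + j)) = (nth 0 t i < nth 0 t j)) ->
  pat (iota a.+1 m) s = t.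
Proof.
move=> ht hsz H; rewrite -(std_perm ht) /pat; apply: std_eq; rewrite ?size_map ?size_iota //.
move=> i j hi hj; rewrite !pat_iota_nth //; exact: H.
Qed.

Lemma size_ext s l : size (ext s l) = (size s).+1.
Proof. by rewrite /ext size_std size_rcons size_map. Qed.

Lemma count_ext s (x : nat) :
  count (fun y => y < x.*2) [seq y.*2 | y <- s] = count (fun y => y < x) s.
Proof. rewrite count_map; apply: eq_count => y /=; by rewrite ltn_double. Qed.

Lemma ext_nth s l i : is_perm s -> 1 <= l <= (size s).+1 -> i < size s ->
  nth 0 (ext s l) i = nth 0 s i + (l <= nth 0 s i).
Proof.
move=> hp hl hi.
rewrite /ext nth_std ?size_rcons ?size_map; last by lia.
rewrite nth_rcons size_map hi (nth_map 0) // -cats1 count_cat count_ext /=.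
have hr := perm_nth_range hp hi.
rewrite perm_count_lt //; last by lia.
case: (leqP l (nth 0 s i)) => h /=.
  have -> : (l.*2).-1 < (nth 0 s i).*2 by lia.
  lia.
have -> : (l.*2).-1 < (nth 0 s i).*2 = false by lia.
lia.
Qed.

Lemma ext_last s l : is_perm s -> 1 <= l <= (size s).+1 ->
  nth 0 (ext s l) (size s) = l.
Proof.
move=> hp hl.
rewrite /ext nth_std ?size_rcons ?size_map //.
rewrite nth_rcons size_map ltnn eqxx -cats1 count_cat /= ltnn addn0.
have -> : count (fun y => y < (l.*2).-1) [seq y.*2 | y <- s] = count (fun y => y < l) s.
  rewrite count_map; apply: eq_count => y /=; lia.
rewrite perm_count_lt //; lia.
Qed.

Lemma ext_perm s l : is_perm s -> 1 <= l -> is_perm (ext s l).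
Proof.
move=> hp hl; apply: uniq_std_perm.
rewrite rcons_uniq map_inj_uniq ?perm_uniq' //; last exact: double_inj.
rewrite andbT; apply/mapP => -[y _]; lia.
Qed.


Lemma fl_mono l x y : (x + (l <= x) < y + (l <= y)) = (x < y).
Proof. case: (leqP l x); case: (leqP l y) => /= *; lia. Qed.
Lemma fl_lt l x : (x + (l <= x) < l) = (x < l).
Proof. case: (leqP l x) => /= *; lia. Qed.
Lemma fl_gt l x : (l < x + (l <= x)) = (l <= x).
Proof. case: (leqP l x) => /= *; lia. Qed.

Lemma finish (k : nat) (sigma pi' : seq nat) l :
  1 <= k -> k <= size sigma -> is_perm sigma -> av sigma ->
  size pi' = k -> is_perm pi' ->
  (forall i j, i < k.-1 -> j < k.-1 ->
     (nth 0 pi' i < nth 0 pi' j) = (nth 0 sigma (size sigma - k + 1 + i) < nth 0 sigma (size sigma - k + 1 + j))) ->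
  1 <= l <= (size sigma).+1 ->
  (forall i, i < k.-1 -> (nth 0 sigma (size sigma - k + 1 + i) < l) = (nth 0 pi' i < nth 0 pi' k.-1)) ->
  (forall i j, i < j -> j < size sigma -> ~~ ((nth 0 sigma j < l) && (l <= nth 0 sigma i))) ->
  Av312 (ext sigma l) /\ en k (ext sigma l) = pi'.
Proof.
move=> hk hkn sp sav pi'sz pi'p Hcmp hl key third.
have up' := perm_uniq' pi'p.
split.
  split; first by apply: ext_perm => //; lia.
  apply/avoidsE => i j h hij hjh; rewrite size_ext ltnS => hh.
  case: (ltnP h (size sigma)) => hh'.
    rewrite !ext_nth //; try lia.
    rewrite !fl_mono; apply: sav => //.
  have -> : h = size sigma by lia.
  rewrite ext_last // !ext_nth //; try lia.
  rewrite fl_lt fl_gt; apply: third; lia.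
rewrite /en size_ext; apply: pat_iota_eq => // i j hi hj.
have Ei : forall i, i < k.-1 -> nth 0 (ext sigma l) ((size sigma).+1 - k + i) =
   nth 0 sigma (size sigma - k + 1 + i) + (l <= nth 0 sigma (size sigma - k + 1 + i)).
  move=> i' hi'; rewrite -ext_nth //; [congr nth; lia | lia].
have El : nth 0 (ext sigma l) ((size sigma).+1 - k + k.-1) = l.
  rewrite -[RHS](ext_last sp hl); congr nth; lia.
have neq : forall j, j < k.-1 -> nth 0 pi' j != nth 0 pi' k.-1.
  move=> j' hj'; rewrite nth_uniq //; [apply/eqP; lia | rewrite pi'sz; lia | rewrite pi'sz; lia].
have [hi'|->] : i < k.-1 \/ i = k.-1 by lia.
  have [hj'|->] : j < k.-1 \/ j = k.-1 by lia.
    by rewrite !Ei // fl_mono Hcmp.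
  by rewrite Ei // El fl_lt key.
have [hj'|->] : j < k.-1 \/ j = k.-1 by lia.
  rewrite (Ei j) // El fl_gt leqNgt key //.
  have := neq j hj'. case: ltngtP => //.
by rewrite El !ltnn.
Qed.


Lemma exists_l (k : nat) (sigma pi' : seq nat) :
  1 <= k -> k <= size sigma -> is_perm sigma -> av sigma ->
  size pi' = k -> is_perm pi' -> av pi' ->
  (forall i j, i < k.-1 -> j < k.-1 ->
     (nth 0 pi' i < nth 0 pi' j) = (nth 0 sigma (size sigma - k + 1 + i) < nth 0 sigma (size sigma - k + 1 + j))) ->
  exists l, 1 <= l <= (size sigma).+1 /\
  (forall i, i < k.-1 -> (nth 0 sigma (size sigma - k + 1 + i) < l) = (nth 0 pi' i < nth 0 pi' k.-1)) /\
  (forall i j, i < j -> j < size sigma -> ~~ ((nth 0 sigma j < l) && (l <= nth 0 sigma i))).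
Proof.
move=> hk hkn sp sav pi'sz pi'p pi'av Hcmp.
have us := perm_uniq' sp.
have up' := perm_uniq' pi'p.
have hr : 1 <= nth 0 pi' k.-1 <= k.
  have := @perm_nth_range pi' k.-1 pi'p; rewrite pi'sz; move=> h; apply: h; lia.
have sr : forall j, j < size sigma -> 1 <= nth 0 sigma j <= size sigma.
  move=> j hj; exact: perm_nth_range.
have pr : forall j, j < k -> 1 <= nth 0 pi' j <= k.
  move=> j hj; have := @perm_nth_range pi' j pi'p; rewrite pi'sz; by apply.
set r := nth 0 pi' k.-1 in hr *.
case: (ltnP 1 r) => hr2; last first.
  exists 1; split; first lia. split.
    move=> i hi; have := sr (size sigma - k + 1 + i) ltac:(lia); have := pr i ltac:(lia); lia.
  move=> i j hij hj; have := sr j hj; lia.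
pose t := size sigma - k + r.
have neq : forall j, j < k.-1 -> nth 0 pi' j != r.
  move=> j' hj'; rewrite /r nth_uniq //; [apply/eqP; lia | rewrite pi'sz; lia | rewrite pi'sz; lia].
have down : forall i' i, i' < i -> i < k.-1 -> nth 0 pi' i < r -> nth 0 pi' i' < r.
  move=> i' i hii hi hpi; rewrite ltnNge; apply/negP => hge.
  have hgt : r < nth 0 pi' i'.
    have := neq i' ltac:(lia); move: hge; case: ltngtP => //.
  have := pi'av i' i k.-1 hii hi ltac:(lia).
  by rewrite -/r hpi hgt.
have cnt : count (fun i => nth 0 pi' i < r) (iota 0 k.-1) = r.-1.
  have := perm_count_lt pi'p (x := r) ltac:(rewrite pi'sz; lia).
  rewrite count_idx pi'sz.
  have -> : k = k.-1 + 1 by lia.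
  rewrite iotaD count_cat /= add0n.
  have -> : (k.-1 + 1).-1 = k.-1 by lia.
  rewrite -/r ltnn; lia.
have stepA : forall i, i < k.-1 -> (nth 0 pi' i < r) = (i < r.-1).
  move=> i hi; case: (boolP (nth 0 pi' i < r)) => hD.
    have : i.+1 <= r.-1.
      rewrite -cnt.
      have -> : k.-1 = i.+1 + (k.-1 - i.+1) by lia.
      rewrite iotaD count_cat count_all_true ?size_iota; first lia.
      move=> y; rewrite mem_iota => hy.
      have [hyi|->] : y < i \/ y = i by lia.
        exact: (down y i).
      exact: hD.
    lia.
  have : r.-1 <= i.
    rewrite -cnt.
    have -> : k.-1 = i + (k.-1 - i) by lia.
    rewrite iotaD count_cat (@count_all_false _ (iota (0 + i) _)).
      rewrite addn0; have := count_size (fun i0 => nth 0 pi' i0 < r) (iota 0 i); rewrite size_iota; lia.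
    move=> y; rewrite mem_iota => hy; apply/negP => hy'.
    have [hyi|hyi] : y = i \/ i < y by lia.
      by move: hD; rewrite -hyi hy'.
    by move: hD; rewrite (down i y hyi) //; lia.
  move=> h; apply/esym/negbTE; rewrite -leqNgt; lia.
have stepB : forall j j', j < t -> t <= j' -> j' < size sigma -> nth 0 sigma j < nth 0 sigma j'.
  move=> j j' hj hj' hj's.
  have Hj' : ~~ (nth 0 pi' (j' - (size sigma - k + 1)) < r).
    rewrite stepA; lia.
  have ej' : size sigma - k + 1 + (j' - (size sigma - k + 1)) = j' by lia.
  case: (leqP (size sigma - k + 1) j) => hjp.
    have ej : size sigma - k + 1 + (j - (size sigma - k + 1)) = j by lia.
    have Hj : nth 0 pi' (j - (size sigma - k + 1)) < r by rewrite stepA; lia.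
    have := Hcmp (j - (size sigma - k + 1)) (j' - (size sigma - k + 1)) ltac:(lia) ltac:(lia).
    rewrite ej ej' => <-.
    move: Hj Hj'; case: ltngtP => //; lia.
  have Hm : nth 0 pi' (r - 2) < r by rewrite stepA; lia.
  have em : size sigma - k + 1 + (r - 2) = t - 1 by lia.
  have hm : nth 0 sigma (t - 1) < nth 0 sigma j'.
    have := Hcmp (r - 2) (j' - (size sigma - k + 1)) ltac:(lia) ltac:(lia).
    rewrite em ej' => <-.
    move: Hm Hj'; case: ltngtP => //; lia.
  have := sav j (t - 1) j' ltac:(lia) ltac:(lia) hj's.
  rewrite hm /= -leqNgt => hle.
  rewrite ltn_neqAle hle andbT nth_uniq //; first (apply/eqP; lia). apply: (leq_trans _ hj's); lia.
have stepC : forall j, j < size sigma -> (nth 0 sigma j < t.+1) = (j < t).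
  move=> j hj; have hc := perm_count_lt sp (x := nth 0 sigma j) ltac:(have := sr j hj; lia).
  rewrite count_idx in hc.
  have e : iota 0 (size sigma) = iota 0 t ++ iota (0 + t) (size sigma - t).
    by rewrite -iotaD; congr iota; lia.
  rewrite e count_cat add0n in hc.
  case: (ltnP j t) => hjt.
    rewrite (@count_all_false _ (iota t _)) in hc; last first.
      move=> y; rewrite mem_iota => hy; rewrite -leqNgt; apply: ltnW; apply: stepB; lia.
    have h1 := count_predC (fun j0 => nth 0 sigma j0 < nth 0 sigma j) (iota 0 t).
    have h2 : 0 < count (predC (fun j0 => nth 0 sigma j0 < nth 0 sigma j)) (iota 0 t).
      rewrite -has_count; apply/hasP; exists j; first by rewrite mem_iota; lia.
      by rewrite /= ltnn.
    rewrite size_iota in h1; have := sr j hj; lia.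
  rewrite (@count_all_true _ (iota 0 t)) ?size_iota in hc; last first.
    move=> y; rewrite mem_iota => hy; apply: stepB; lia.
  have := sr j hj; move=> h; apply/negbTE; rewrite -leqNgt; lia.
exists t.+1; split; first lia. split.
  move=> i hi; rewrite stepC; last lia. rewrite stepA //; lia.
move=> i j hij hj; apply/negP => /andP[h1 h2].
have := stepC j hj; rewrite h1 => /esym hjt.
have := stepC i ltac:(lia); rewrite ltnNge h2 /= => /esym hit.
move/negbT: hit; rewrite -leqNgt; lia.
Qed.

Unset Implicit Arguments.

Theorem mainTheorem5 (k : nat) (sigma pi pi' : seq nat) :
  1 <= k ->
  Av312 sigma -> k <= size sigma ->
  Av312_k k pi -> en k sigma = pi ->
  Av312_k k pi' ->
  pat (iota 1 k.-1) pi' = pat (iota 2 k.-1) pi ->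
  exists l : nat, 1 <= l <= (size sigma).+1 /\
    Av312 (ext sigma l) /\ en k (ext sigma l) = pi'.
Proof.
move=> hk [sp /avoidsE sav] hkn [pisz _] hen [pi'sz [pi'p /avoidsE pi'av]] Hpat.
have Hcmp : forall i j, i < k.-1 -> j < k.-1 ->
     (nth 0 pi' i < nth 0 pi' j) = (nth 0 sigma (size sigma - k + 1 + i) < nth 0 sigma (size sigma - k + 1 + j)).
  move=> i j hi hj.
  have e := congr1 (fun t => nth 0 t i < nth 0 t j) Hpat; simpl in e.
  rewrite (pat_iota_cmp 0) // (pat_iota_cmp 1) // !add0n in e.
  rewrite e -hen /en (pat_iota_cmp (size sigma - k)); try lia.
  by rewrite !addnA.
have [l [hl [key third]]] := exists_l hk hkn sp sav pi'sz pi'p pi'av Hcmp.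
exists l; split => //.
exact: finish.
Qed.
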